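(* For all integers $p \ge 0$ and $n \ge 1$, \[ p! + \sum_{t=0}^{p} \begin{bmatrix} p+1 \\ t+1 \end{bmatrix} S_t(n) = p! \binom{n+p+1}{p+1}. \]
   Context: $S_t(n) = 1^t + 2^t + \cdots + n^t$ for integers $t \ge 0$ (so $S_0(n)=n$). $\begin{bmatrix} m \\ k \end{bmatrix}$ denotes the unsigned Stirling number of the first kind: the number of permutations of $m$ elements with exactly $k$ cycles. *)

(* Defs.v *)
From mathcomp Require Import all_boot all_order all_fingroup.
Set Implicit Arguments. Unset Strict Implicit. Unset Printing Implicit Defensive.

Definition powsum (t n : nat) : nat := \sum_(1 <= i < n.+1) i ^ t.

(* Unsigned Stirling number of the first kind [m; k]: the number of
   permutations of m elements ('S_m = {perm 'I_m}) with exactly k cycles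
   (porbits s = set of cycles of s, fixed points counted as 1-cycles). *)
Definition stirling1 (m k : nat) : nat :=
  #|[set s : 'S_m | #|porbits s| == k]|.

(* Main.v *)
Require Import Defs.
From mathcomp Require Import all_boot all_order all_fingroup.
From mathcomp Require Import zify.
Set Implicit Arguments. Unset Strict Implicit. Unset Printing Implicit Defensive.

Section Lift.
Variable m : nat.
Implicit Type s : 'S_m.
Local Notation i0 := (@ord0 m).
Local Notation u s := (lift_perm i0 i0 s).

Lemma lpX s n k : ((u s) ^+ n)%g (lift i0 k) = lift i0 ((s ^+ n)%g k).
Proof.
elim: n => [|n IH]; first by rewrite !expg0 !perm1.
by rewrite !expgSr !permM IH lift_perm_lift.
Qed.

Lemma lpXi s n : ((u s) ^+ n)%g i0 = i0.
Proof.
elim: n => [|n IH]; first by rewrite !expg0 !perm1.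
by rewrite !expgSr !permM IH lift_perm_id.
Qed.

Lemma porbit_lift s k : porbit (u s) (lift i0 k) = lift i0 @: porbit s k.
Proof.
apply/setP => y; apply/porbitP/imsetP.
  by move=> [n ->]; exists ((s ^+ n)%g k); [apply: mem_porbit | rewrite lpX].
by move=> [z /porbitP [n ->] ->]; exists n; rewrite lpX.
Qed.

Lemma porbit_fix s : porbit (u s) i0 = [set i0].
Proof.
apply/setP => y; rewrite inE; apply/porbitP/eqP => [[n ->]|->].
  by rewrite lpXi.
by exists 0; rewrite expg0 perm1.
Qed.

Lemma card_porbits_lift s : #|porbits (u s)| = #|porbits s|.+1.
Proof.
have -> : porbits (u s) = [set i0] |: ((fun A : {set 'I_m} => lift i0 @: A) @: porbits s).
  apply/setP => B; rewrite !inE; apply/imsetP/orP.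
    move=> [x _ ->]; case: (unliftP i0 x) => [k ->|->].
      by right; apply/imsetP; exists (porbit s k); [apply: imset_f | rewrite porbit_lift].
    by left; rewrite porbit_fix.
  move=> [/eqP -> | /imsetP [A /imsetP[k _ ->] ->]].
    by exists i0; rewrite ?porbit_fix.
  by exists (lift i0 k); rewrite ?porbit_lift.
rewrite cardsU1 card_imset; last by apply: imset_inj; apply: lift_inj.
suff -> : [set i0] \notin (fun A : {set 'I_m} => lift i0 @: A) @: porbits s by [].
apply/imsetP => -[A _ HA].
have : i0 \in [set i0] by rewrite inE.
by rewrite HA => /imsetP [z _ /eqP]; rewrite (negbTE (neq_lift _ _)).
Qed.

Definition hh (p : 'I_m.+1 * 'S_m) : 'S_m.+1 := (tperm p.1 i0 * u p.2)%g.

Lemma hh_inj : injective hh.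
Proof.
move=> [j s] [j' s'] /= E.
have Hj : forall j s, hh (j, s) j = i0.
  by move=> a b; rewrite /hh permM tpermL lift_perm_id.
have ejj : j = j'.
  apply: (perm_inj (s := hh (j', s'))); by rewrite Hj -E Hj.
subst j'; move: E; rewrite /hh /= => /mulgI E.
congr (_, _); apply/permP => k; apply: (@lift_inj _ i0).
by rewrite -!(lift_perm_lift i0 i0) E.
Qed.

Lemma hh_bij : bijective hh.
Proof.
apply: inj_card_bij; first exact: hh_inj.
by rewrite card_prod !card_Sn card_ord factS.
Qed.

Definition F n x := \sum_(s : 'S_n) x ^ #|porbits s|.

Lemma F_rec x : F m.+1 x = (x + m) * F m x.
Proof.
rewrite /F (reindex hh); last by apply: onW_bij; exact: hh_bij.
rewrite -(pair_big xpredT xpredT (fun j s => x ^ #|porbits (hh (j, s))|)) /=.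
rewrite exchange_big big_distrr /=; apply: eq_bigr => s _.
have key : forall j : 'I_m.+1, #|porbits (hh (j, s))| = #|porbits s| + (j == i0).
  move=> j; have := porbits_mul_tperm (u s) j i0.
  rewrite porbit_fix inE card_porbits_lift.
  rewrite /hh /=; case: eqP => [->|ne] /=.
    by rewrite !addn0 addn1 => H; exact: H.
  rewrite addn0 addn1 -addn2 => /eqP; rewrite eqn_add2r => /eqP H; exact: H.
rewrite (bigD1 i0) //= key eqxx addn1 expnS.
rewrite (eq_bigr (fun _ => x ^ #|porbits s|)); last first.
  by move=> j /negbTE Hj; rewrite key Hj addn0.
rewrite sum_nat_const cardC1 card_ord /=; lia.
Qed.
End Lift.
Lemma F0 x : F 0 x = 1.
Proof.
rewrite /F (eq_bigr (fun _ => 1)) ?sum_nat_const ?card_Sn //.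
move=> s _; suff -> : #|porbits s| = 0 by [].
apply/eqP; rewrite -leqn0; apply: leq_trans (leq_imset_card _ _) _.
by rewrite card_ord.
Qed.

Lemma F_prod n x : F n x = \prod_(k < n) (x + k).
Proof.
elim: n => [|n IH]; first by rewrite F0 big_ord0.
by rewrite F_rec IH big_ord_recr /= mulnC.
Qed.

Lemma F_stir n x : F n x = \sum_(k < n.+1) stirling1 n k * x ^ k.
Proof.
rewrite /F; transitivity (\sum_(s : 'S_n) \sum_(k < n.+1) (#|porbits s| == k) * x ^ k).
  apply: eq_bigr => s _.
  have lt : #|porbits s| < n.+1.
    by rewrite ltnS; apply: leq_trans (leq_imset_card _ _) _; rewrite card_ord.
  rewrite (bigD1 (Ordinal lt)) //= eqxx mul1n big1 ?addn0 // => k Hk.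
  rewrite (_ : (#|porbits s| == k) = false) //; apply: contraNF Hk => /eqP E.
  by apply/eqP/val_inj; rewrite /= E.
rewrite exchange_big; apply: eq_bigr => k _; rewrite -big_distrl /=; congr (_ * _).
rewrite /stirling1 -sum1_card [RHS]big_mkcond /=; apply: eq_bigr => s _.
by rewrite inE; case: eqP.
Qed.

Lemma stir_sum p i : 0 < i ->
  \sum_(0 <= t < p.+1) stirling1 p.+1 t.+1 * i ^ t = \prod_(k < p) (i + 1 + k).
Proof.
move=> hi.
have E x : stirling1 p.+1 0 + \sum_(k < p.+1) stirling1 p.+1 k.+1 * x ^ k.+1
      = x * \prod_(k < p) (x + k.+1).
  have := F_stir p.+1 x; rewrite F_prod big_ord_recl [X in _ = X]big_ord_recl => H.
  rewrite /= addn0 expn0 muln1 in H; symmetry; exact: H.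
have E0 : stirling1 p.+1 0 = 0.
  have := E 0; rewrite mul0n big1 ?addn0 // => k _; by rewrite expnS mul0n muln0.
have Ei := E i; rewrite E0 add0n in Ei.
rewrite big_mkord.
apply/eqP; rewrite -(eqn_pmul2l hi) big_distrr /=.
rewrite (eq_bigr (fun k : 'I_p.+1 => stirling1 p.+1 k.+1 * i ^ k.+1)); last first.
  by move=> k _; rewrite expnS mulnCA.
rewrite Ei; apply/eqP; congr (_ * _); apply: eq_bigr => k _.
by rewrite addn1 addnS.
Qed.

Lemma prod_ffact p a : \prod_(k < p) (a + 1 + k) = (a + p) ^_ p.
Proof.
elim: p => [|p IH]; first by rewrite big_ord0 ffactn0.
rewrite big_ord_recr IH /= [in RHS]addnS ffactSS mulnC; congr (_ * _); lia.
Qed.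

Lemma hockey p n : \sum_(1 <= i < n.+1) 'C(i + p, p) + 1 = 'C(n + p + 1, p + 1).
Proof.
elim: n => [|n IH]; first by rewrite big_geq // add0n binn.
rewrite big_nat_recr //= -addnA (addnC _ 1) addnA IH.
rewrite (_ : n.+1 + p + 1 = (n + p + 1).+1); last by lia.
rewrite !(addn1 p) binS (_ : n + p + 1 = n.+1 + p) //; lia.
Qed.

Theorem mainTheorem5 (p n : nat) (hn : 1 <= n) :
  p`! + \sum_(0 <= t < p.+1) stirling1 p.+1 t.+1 * powsum t n
  = p`! * 'C(n + p + 1, p + 1).
Proof.
rewrite /powsum.
rewrite (eq_bigr (fun t => \sum_(1 <= i < n.+1) stirling1 p.+1 t.+1 * i ^ t)); last first.
  by move=> t _; rewrite big_distrr.
rewrite exchange_big /=.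
rewrite (eq_big_nat _ _ (F2 := fun i => p`! * 'C(i + p, p))); last first.
  move=> i /andP [hi _]; rewrite stir_sum // prod_ffact -bin_ffact mulnC.
  by rewrite addnC.
by rewrite -big_distrr -hockey mulnDr muln1 addnC.
Qed.
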